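(* Let $a,b\in GF(q)\setminus\{0\}$ with $a\neq b$. If $b/a$ is a square in $GF(q)$, then $\mathcal B_a$ and $\mathcal B_b$ have exactly $2(q+1)$ common tangent circles; all of them are of the first type, and every common tangent circle $\mathcal B^1_{(s,c)}$ satisfies $$\left(\frac{c-b-s\bar s}{c-a-s\bar s}\right)^2=\frac ba .$$ If $b/a$ is a non-square in $GF(q)$, then $\mathcal B_a$ and $\mathcal B_b$ have no common tangent circle.
   Context: Let $p$ be an odd prime, $m\ge1$, and $q=p^m$. $GF(q^2)$ denotes the quadratic extension of $GF(q)$, and for $z\in GF(q^2)$ we write $\bar z:=z^{q}$. The Miquelian Möbius plane $\mathbb M(q)$ has point set $GF(q^2)\cup\{\infty\}$ and circles of two types: for $s\in GF(q^2)$ and $c\in GF(q)\setminus\{0\}$, the circle of the first type $\mathcal B^1_{(s,c)}=\{z\in GF(q^2):(z-s)(\bar z-\bar s)=c\}$; for $s\in GF(q^2)\setminus\{0\}$ and $c\in GF(q)$, the circle of the second type $\mathcal B^2_{(s,c)}=\{z\in GF(q^2):\bar s z+s\bar z=c\}\cup\{\infty\}$. Two circles are called tangential if they have exactly one point in common. For $a\in GF(q)\setminus\{0\}$ put $\mathcal B_a:=\mathcal B^1_{(0,a)}$. A common tangent circle of two circles is a circle tangential to both. *)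

(* Defs.v *)
From HB Require Import structures.
From mathcomp Require Import all_boot all_order all_algebra all_field.
Set Implicit Arguments. Unset Strict Implicit. Unset Printing Implicit Defensive.
Import GRing.Theory.
Local Open Scope ring_scope.

(* F plays the role of GF(q^2) (any finite field with q^2 elements);
   points of the Miquelian Moebius plane M(q) are [option F], with
   [None] standing for the point infinity. *)

Definition conjq (F : finFieldType) (q : nat) (z : F) : F := z ^+ q.

Definition inGFq (F : finFieldType) (q : nat) (x : F) : bool := x ^+ q == x.

Definition circle1 (F : finFieldType) (q : nat) (s c : F) : {set option F} :=
  [set z | if z is Some w then (w - s) * (conjq q w - conjq q s) == c else false].

Definition circle2 (F : finFieldType) (q : nat) (s c : F) : {set option F} :=
  [set z | if z is Some w then conjq q s * w + s * conjq q w == c else true].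

Definition is_circle1 (F : finFieldType) (q : nat) (C : {set option F}) : bool :=
  [exists s : F, exists c : F, [&& inGFq q c, c != 0 & C == circle1 q s c]].

Definition is_circle2 (F : finFieldType) (q : nat) (C : {set option F}) : bool :=
  [exists s : F, exists c : F, [&& s != 0, inGFq q c & C == circle2 q s c]].

Definition is_circle (F : finFieldType) (q : nat) (C : {set option F}) : bool :=
  is_circle1 q C || is_circle2 q C.

Definition tangential (F : finFieldType) (C D : {set option F}) : bool :=
  #|C :&: D| == 1%N.

Definition Bcirc (F : finFieldType) (q : nat) (a : F) : {set option F} :=
  circle1 q 0 a.

Definition common_tangent (F : finFieldType) (q : nat) (C D E : {set option F}) : bool :=
  [&& is_circle q E, tangential E C & tangential E D].

(* Main.v *)
Require Import Defs.
From HB Require Import structures.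
From mathcomp Require Import all_boot all_order all_algebra all_field.
From mathcomp Require Import ring zify.
Set Implicit Arguments. Unset Strict Implicit. Unset Printing Implicit Defensive.
Import GRing.Theory.
Local Open Scope ring_scope.
Ltac nz := repeat (apply: mulf_neq0); rewrite ?invr_neq0 ?expf_neq0 //.
Ltac fld := field; repeat (apply/andP; split); try assumption.


Definition goodq (F : finFieldType) (q : nat) :=
  [/\ forall x y : F, (x + y) ^+ q = x ^+ q + y ^+ q, #|F| = (q * q)%N,
      (3 <= q)%N & (2%:R : F) != 0].

Lemma cjD (F : finFieldType) q (H : goodq F q) (x y : F) :
  conjq q (x + y) = conjq q x + conjq q y.
Proof. by case: H => H _ _ _; rewrite /conjq H. Qed.

Lemma cjM (F : finFieldType) q (x y : F) : conjq q (x * y) = conjq q x * conjq q y.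
Proof. by rewrite /conjq exprMn. Qed.

Lemma cj0 (F : finFieldType) q (H : goodq F q) : conjq q (0 : F) = 0.
Proof. by case: H => _ _ Hq _; rewrite /conjq expr0n; case: q Hq. Qed.

Lemma cj1 (F : finFieldType) q : conjq q (1 : F) = 1.
Proof. by rewrite /conjq expr1n. Qed.

Lemma cjN (F : finFieldType) q (H : goodq F q) (x : F) : conjq q (- x) = - conjq q x.
Proof. by apply/eqP; rewrite -subr_eq0 opprK -cjD // addNr cj0. Qed.

Lemma cjB (F : finFieldType) q (H : goodq F q) (x y : F) :
  conjq q (x - y) = conjq q x - conjq q y.
Proof. by rewrite cjD // cjN. Qed.

Lemma cjK (F : finFieldType) q (H : goodq F q) (x : F) : conjq q (conjq q x) = x.
Proof. by case: H => _ Hc _ _; rewrite /conjq -exprM -Hc expf_card. Qed.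

Lemma normK (F : finFieldType) q (H : goodq F q) (s : F) :
  conjq q (s * conjq q s) = s * conjq q s.
Proof. by rewrite cjM cjK // mulrC. Qed.

Lemma cjV (F : finFieldType) q (x : F) : conjq q (x^-1) = (conjq q x)^-1.
Proof. by rewrite /conjq exprVn. Qed.

Lemma cjnat (F : finFieldType) q (H : goodq F q) n : conjq q (n%:R : F) = n%:R.
Proof. by elim: n => [|n IH]; rewrite ?cj0 // -addn1 natrD cjD // IH cj1. Qed.

Lemma cj_eq0 (F : finFieldType) q (H : goodq F q) (x : F) : (conjq q x == 0) = (x == 0).
Proof. by case: H => _ _ Hq _; rewrite /conjq expf_eq0; case: q Hq. Qed.

Lemma inGFqE (F : finFieldType) q (x : F) : inGFq q x = (conjq q x == x).
Proof. by []. Qed.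

Lemma cjX (F : finFieldType) q (x : F) k : conjq q (x ^+ k) = (conjq q x) ^+ k.
Proof. by rewrite /conjq -!exprM mulnC. Qed.


Lemma tang1_fwd (F : finFieldType) q (H : goodq F q) (s c a : F) : a != 0 ->
  #|circle1 q s c :&: Bcirc q a| = 1%N ->
  s != 0 /\ (a + s * conjq q s - c) ^+ 2 = 4%:R * a * (s * conjq q s).
Proof.
move=> a0 /eqP/cards1P [x Hx].
have mem : forall w, Some w \in circle1 q s c :&: Bcirc q a -> Some w = x.
  by move=> w; rewrite Hx inE => /eqP.
have : x \in circle1 q s c :&: Bcirc q a by rewrite Hx set11.
case: x Hx mem => [w|]; last by rewrite !inE.
move=> _ mem; rewrite !inE /= cj0 // !subr0 => /andP[/eqP Hc /eqP Ha].
have H2 : (2%:R : F) != 0 by case: H.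
have [s0|s0] := eqVneq s 0.
  exfalso; subst s.
  rewrite cj0 // !subr0 in Hc.
  have := mem (- w); rewrite !inE /= cj0 // !subr0 cjN // mulrNN Ha -{1}Ha Hc !eqxx => /(_ isT) [] Ew.
  have : w *+ 2 = 0 by rewrite mulr2n -{1}Ew addNr.
  rewrite -mulr_natl => /eqP; rewrite mulf_eq0 (negbTE H2) /= => /eqP w0.
  by move: a0; rewrite -Ha w0 mul0r eqxx.
split=> //.
have cs0 : conjq q s != 0 by rewrite cj_eq0.
have Ecw' : conjq q (conjq q w * s / conjq q s) = w * conjq q s / s.
  by rewrite !cjM cjV !cjK.
have := mem (conjq q w * s / conjq q s); rewrite !inE /= cj0 // !subr0 Ecw'.
have -> : (conjq q w * s / conjq q s - s) * (w * conjq q s / s - conjq q s) =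
   (w - s) * (conjq q w - conjq q s) by field; rewrite cs0 s0.
have -> : conjq q w * s / conjq q s * (w * conjq q s / s) = w * conjq q w
  by field; rewrite cs0 s0.
rewrite Hc Ha !eqxx => /(_ isT) [] Ew.
have Ecw : conjq q w = w * conjq q s / s.
  by rewrite -[in RHS]Ew; field; rewrite cs0 s0.
by rewrite -Hc -Ha Ecw; field.
Qed.


Lemma tang2_fwd (F : finFieldType) q (H : goodq F q) (s c a : F) : s != 0 ->
  #|circle2 q s c :&: Bcirc q a| = 1%N ->
  c ^+ 2 = 4%:R * a * (s * conjq q s).
Proof.
move=> s0 /eqP/cards1P [x Hx].
have mem : forall w, Some w \in circle2 q s c :&: Bcirc q a -> Some w = x.
  by move=> w; rewrite Hx inE => /eqP.
have : x \in circle2 q s c :&: Bcirc q a by rewrite Hx set11.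
case: x Hx mem => [w|]; last by rewrite !inE.
move=> _ mem; rewrite !inE /= cj0 // !subr0 => /andP[/eqP Hc /eqP Ha].
have cs0 : conjq q s != 0 by rewrite cj_eq0.
have Ecw' : conjq q (conjq q w * s / conjq q s) = w * conjq q s / s.
  by rewrite !cjM cjV !cjK.
have := mem (conjq q w * s / conjq q s); rewrite !inE /= cj0 // !subr0 Ecw'.
have -> : conjq q s * (conjq q w * s / conjq q s) + s * (w * conjq q s / s) =
   conjq q s * w + s * conjq q w by field; rewrite cs0 s0.
have -> : conjq q w * s / conjq q s * (w * conjq q s / s) = w * conjq q w
  by field; rewrite cs0 s0.
rewrite Hc Ha !eqxx => /(_ isT) [] Ew.
have Ecw : conjq q w = w * conjq q s / s.
  by rewrite -[in RHS]Ew; field; rewrite cs0 s0.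
by rewrite -Hc -Ha Ecw; field.
Qed.


Lemma tang1_bwd (F : finFieldType) q (H : goodq F q) (s c a : F) : s != 0 ->
  conjq q a = a -> conjq q c = c ->
  (a + s * conjq q s - c) ^+ 2 = 4%:R * a * (s * conjq q s) ->
  #|circle1 q s c :&: Bcirc q a| = 1%N.
Proof.
move=> s0 Ca Cc.
set k := a + s * conjq q s - c => Hk.
have H2 : (2%:R : F) != 0 by case: H.
have cs0 : conjq q s != 0 by rewrite cj_eq0.
have H4 : (4%:R : F) != 0 by rewrite (_ : 4 = 2*2)%N // natrM mulf_neq0.
have Ck : conjq q k = k by rewrite /k !cjD // cjN // Ca Cc normK.
apply/eqP/cards1P; exists (Some (k / (2%:R * conjq q s))).
apply/setP => -[w|]; rewrite !inE //= cj0 // !subr0.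
apply/andP/eqP => [[/eqP Hc /eqP Ha]|[->]].
  congr Some.
  have E : (w * conjq q s - k / 2%:R) ^+ 2 = 0.
    have -> : (w * conjq q s - k / 2%:R) ^+ 2 =
      (w * conjq q s) ^+ 2 - k * (w * conjq q s) + (4%:R * a * (s * conjq q s)) / 4%:R.
      by rewrite -Hk; fld.
    by rewrite /k -Hc -Ha; fld.
  move: E => /eqP; rewrite expf_eq0 /= subr_eq0 => /eqP E.
  by rewrite -[in LHS](mulfK cs0 w) E; fld.
have Ew : conjq q (k / (2%:R * conjq q s)) = k / (2%:R * s).
  by rewrite cjM cjV cjM cjK // cjnat // Ck.
rewrite Ew.
have Ea : k / (2%:R * conjq q s) * (k / (2%:R * s)) = a.
  have -> : k / (2%:R * conjq q s) * (k / (2%:R * s)) = k ^+ 2 / (4%:R * (s * conjq q s)).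
    by fld.
  by rewrite Hk; fld.
split; apply/eqP => //.
have -> : (k / (2%:R * conjq q s) - s) * (k / (2%:R * s) - conjq q s) =
  k / (2%:R * conjq q s) * (k / (2%:R * s)) - k + s * conjq q s by fld.
by rewrite Ea /k; ring.
Qed.


Lemma roots_card (F : finFieldType) (p : {poly F}) : p != 0 ->
  (#|[set x | root p x]| < size p)%N.
Proof.
move=> p0; rewrite cardE; apply: max_poly_roots => //; last exact: enum_uniq.
by apply/allP => x; rewrite mem_enum inE.
Qed.

Definition Kst (F : finFieldType) q : {set F} := [set x | (conjq q x == x) && (x != 0)].
Definition fib (F : finFieldType) q (n : F) : {set F} := [set z | z * conjq q z == n].

Lemma Kst_card (F : finFieldType) q (H : goodq F q) : (#|Kst F q| <= q - 1)%N.
Proof.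
have Hq : (3 <= q)%N by case: H.
have p0 : ('X^(q.-1) - 1%:P : {poly F}) != 0.
  by rewrite -size_poly_eq0 size_XnsubC //; lia.
have := roots_card p0; rewrite size_XnsubC; last by lia.
have -> : q.-1.+1 = q by lia.
move=> Hr; have : (#|Kst F q| <= #|[set x | root ('X^(q.-1) - 1%:P : {poly F}) x]|)%N.
  apply: subset_leq_card; apply/subsetP => x; rewrite !inE => /andP[/eqP Cx x0].
  rewrite rootE !hornerE subr_eq0; apply/eqP.
  apply: (mulIf x0); rewrite mul1r -exprSr.
  by have -> : q.-1.+1 = q by lia.
lia.
Qed.

Lemma fib_le (F : finFieldType) q (n : F) : (#|fib q n| <= q.+1)%N.
Proof.
have p0 : ('X^(q.+1) - n%:P : {poly F}) != 0 by rewrite -size_poly_eq0 size_XnsubC.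
have := roots_card p0; rewrite size_XnsubC // ltnS; apply: leq_trans.
apply: subset_leq_card; apply/subsetP => x; rewrite !inE => /eqP Ex.
by rewrite rootE !hornerE subr_eq0 exprS -Ex.
Qed.

Lemma fib_eq (F : finFieldType) q (H : goodq F q) (n0 : F) :
  conjq q n0 = n0 -> n0 != 0 -> #|fib q n0| = q.+1.
Proof.
move=> Cn0 n00.
have Hc : #|F| = (q * q)%N by case: H.
have Hq : (3 <= q)%N by case: H.
have Kn0 : n0 \in Kst F q by rewrite inE Cn0 eqxx n00.
have E1 : #|[set~ (0 : F)]| = \sum_(n in Kst F q) #|fib q n|.
  rewrite -sum1_card (partition_big (fun z => z * conjq q z) (fun n => n \in Kst F q)).
    apply: eq_bigr => n; rewrite inE => /andP[_ nz].
    rewrite sum1dep_card; apply: eq_card => z; rewrite !inE.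
    case: eqVneq => [->|] //=; by rewrite mul0r eq_sym (negbTE nz).
  move=> z; rewrite !inE => z0; rewrite normK // eqxx /= mulf_neq0 //.
  by rewrite cj_eq0.
rewrite cardsC1 Hc (bigD1 n0) //= in E1.
have E2 : (\sum_(n in Kst F q | n != n0) #|fib q n| <= #|Kst F q :\ n0| * q.+1)%N.
  apply: leq_trans (@leq_sum _ _ _ _ (fun _ => q.+1) (fun i _ => fib_le q i)) _.
  rewrite sum_nat_cond_const leq_mul2r; apply/orP; right.
  by rewrite leq_eqVlt; apply/orP; left; apply/eqP; apply: eq_card => n; rewrite !inE andbC.
have E3 := Kst_card H.
have E4 := cardsD1 n0 (Kst F q); rewrite Kn0 in E4.
have E5 := fib_le q n0.
rewrite /= add1n in E4.
rewrite E4 in E3.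
have E6 : (#|Kst F q :\ n0| * q.+1 <= (q-2) * q.+1)%N.
 rewrite leq_mul2r; apply/orP; right. move: E3; move: (#|Kst F q :\ n0|) => k; lia.
have E7 : (q*q).-1 = ((q-2)*q.+1 + q.+1)%N by nia.
move: E1 E2 E5 E6 E7.
move: (\sum_(i in Kst F q | i != n0) #|fib q i|) => S.
move: (#|fib q n0|) => f. move: (#|Kst F q :\ n0|)=> k. move: (q * q)%N.-1 => Q. lia.
Qed.



Lemma center_uniq (F : finFieldType) q (H : goodq F q) (s s' c c' : F) :
  conjq q c = c -> c != 0 -> circle1 q s c = circle1 q s' c' -> s = s'.
Proof.
move=> Cc c0; have [d ->] : exists d, s' = s + d by exists (s' - s); rewrite addrC subrK.
move=> Eq; apply/eqP; rewrite -subr_eq0 opprD addrA subrr sub0r oppr_eq0.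
apply/negP => /negP d0; have Hq : (3 <= q)%N by case: H.
have cd0 : conjq q d != 0 by rewrite cj_eq0.
pose k := c + d * conjq q d - c'; pose A := c * (d * conjq q d).
pose P : {poly F} := ('X - k%:P) * 'X + A%:P.
have sP : size P = 3%N.
  rewrite /P size_MXaddC size_XsubC; case: ifP => // /andP[/eqP E _].
  by move: (size_XsubC k); rewrite E size_poly0.
have P0 : P != 0 by rewrite -size_poly_eq0 sP.
have Hr := roots_card P0; rewrite sP in Hr.
have Hf := fib_eq H Cc c0.
have : (#|[set (z * conjq q d)%R | z in fib q c]| <= #|[set x | root P x]|)%N.
  apply: subset_leq_card; apply/subsetP => x /imsetP [z]; rewrite inE => /eqP Hz ->.
  rewrite inE.
  have : Some (z + s) \in circle1 q s c by rewrite inE /= addrK cjD // addrK Hz.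
  rewrite Eq inE /= !cjD // => /eqP Hc'.
  rewrite rootE /P hornerD hornerMX hornerXsubC hornerC /k /A -Hc' -Hz; apply/eqP; ring.
rewrite card_imset; last exact: mulIf.
rewrite Hf; lia.
Qed.


Lemma pair_solve (F : finFieldType) (a b n c y : F) : (4%:R : F) != 0 ->
  a != 0 -> 1 - y != 0 -> b = a * y ^+ 2 ->
  (a + n - c) ^+ 2 = 4%:R * a * n -> b + n - c = y * (a + n - c) ->
  n = a * (1 + y) ^+ 2 / 4%:R /\ c = a * (1 - y) ^+ 2 / 4%:R.
Proof.
move=> H4 a0 y1 hb Hu hv.
have Eu : a + n - c = a * (1 + y).
  apply: (mulfI y1); rewrite mulrBl mul1r -hv hb; ring.
have En : n = (a + n - c) ^+ 2 / (4%:R * a) by rewrite Hu; fld.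
rewrite Eu in En; split; first by rewrite En; fld.
have -> : c = a + n - (a + n - c) by ring.
by rewrite Eu En; fld.
Qed.

Lemma pair_tan (F : finFieldType) q (H : goodq F q) (a b y s : F) :
  a != 0 -> conjq q a = a -> conjq q b = b -> conjq q y = y ->
  b = a * y ^+ 2 -> y ^+ 2 != 1 ->
  s * conjq q s = a * (1 + y) ^+ 2 / 4%:R ->
  common_tangent q (Bcirc q a) (Bcirc q b) (circle1 q s (a * (1 - y) ^+ 2 / 4%:R)).
Proof.
move=> a0 Ca Cb Cy hb y2 Hs.
have H2 : (2%:R : F) != 0 by case: H.
have H4 : (4%:R : F) != 0 by rewrite (_ : 4 = 2*2)%N // natrM mulf_neq0.
have yp : 1 + y != 0.
  apply: contra y2 => /eqP h; have -> : y = -1 by apply/eqP; rewrite -subr_eq0 opprK addrC h.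
  by rewrite sqrrN expr1n.
have ym : 1 - y != 0.
  apply: contra y2 => /eqP h; have -> : y = 1 by apply/eqP; rewrite -subr_eq0 -oppr_eq0 opprB h.
  by rewrite expr1n.
have s0 : s != 0.
  have : a * (1 + y) ^+ 2 / 4%:R != 0 by nz.
  by rewrite -Hs mulf_eq0 negb_or => /andP[].
have Cc : conjq q (a * (1 - y) ^+ 2 / 4%:R) = a * (1 - y) ^+ 2 / 4%:R.
  by rewrite cjM cjM cjX cjV cjB // cj1 cjnat // Ca Cy.
apply/and3P; split.
- apply/orP; left; apply/existsP; exists s; apply/existsP; exists (a * (1 - y) ^+ 2 / 4%:R).
  rewrite inGFqE Cc eqxx eqxx /= andbT.
  by nz.
- apply/eqP; apply: tang1_bwd => //; rewrite Hs; fld.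
- apply/eqP; apply: tang1_bwd => //; rewrite Hs hb; fld.
Qed.


Lemma goodq_of (p m : nat) (F : finFieldType) :
  prime p -> odd p -> (0 < m)%N -> #|F| = ((p ^ m) ^ 2)%N -> goodq F (p ^ m).
Proof.
move=> pp po m0 HF.
have pF : p \in [pchar F].
  by apply: (@card_finPcharP _ _ (m * 2)) => //; rewrite HF expnM.
split.
- move=> x y; apply: exprDn_pchar.
  by rewrite (eq_pnat _ (pcharf_eq pF)) pnatX pnat_id.
- by rewrite HF mulnn.
- have p3 : (3 <= p)%N.
    have p2 : p != 2%N by apply: contraTneq po => ->.
    have := prime_gt1 pp; move: p2; clear; lia.
  clear HF; case: m m0 => // m _; rewrite expnS.
  have := expn_gt0 p m; rewrite (prime_gt0 pp) /=; nia.
- rewrite -(dvdn_pcharf pF); apply/negP => /(dvdn_leq (ltn0Sn 1)).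
  have p2 : p != 2%N by apply: contraTneq po => ->.
  have := prime_gt1 pp; move: p2; clear; lia.
Qed.

Unset Implicit Arguments.

Theorem mainTheorem2 (p m : nat) (F : finFieldType) (a b : F) :
  prime p -> odd p -> (0 < m)%N -> #|F| = ((p ^ m) ^ 2)%N ->
  inGFq (p ^ m) a -> inGFq (p ^ m) b -> a != 0 -> b != 0 -> a != b ->
  ((exists2 y : F, inGFq (p ^ m) y & y ^+ 2 = b / a) ->
     [/\ #|[set E | common_tangent (p ^ m) (Bcirc (p ^ m) a) (Bcirc (p ^ m) b) E]|
           = (2 * (p ^ m + 1))%N,
         (forall E, common_tangent (p ^ m) (Bcirc (p ^ m) a) (Bcirc (p ^ m) b) E ->
                    is_circle1 (p ^ m) E) &
         (forall s c : F, inGFq (p ^ m) c -> c != 0 ->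
            common_tangent (p ^ m) (Bcirc (p ^ m) a) (Bcirc (p ^ m) b)
              (circle1 (p ^ m) s c) ->
            ((c - b - s * conjq (p ^ m) s) / (c - a - s * conjq (p ^ m) s)) ^+ 2
              = b / a)]) /\
  (~ (exists2 y : F, inGFq (p ^ m) y & y ^+ 2 = b / a) ->
     forall E, ~~ common_tangent (p ^ m) (Bcirc (p ^ m) a) (Bcirc (p ^ m) b) E).
Proof.
move=> pp po m0 HF Ha Hb a0 b0 ab.
have H := goodq_of pp po m0 HF.
move: H; set q := (p ^ m)%N => H.
have H2 : (2%:R : F) != 0 by case: H.
have H4 : (4%:R : F) != 0 by rewrite (_ : 4 = 2*2)%N // natrM mulf_neq0.
move: Ha Hb; rewrite !inGFqE => /eqP Ca /eqP Cb.
have L1 : forall E, common_tangent q (Bcirc q a) (Bcirc q b) E -> is_circle1 q E.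
  move=> E /and3P[/orP[] // /existsP[s /existsP[c /and3P[s0 _ /eqP EE]]]].
  rewrite EE => /eqP Ta /eqP Tb; exfalso.
  have Ea := tang2_fwd H s0 Ta; have Eb := tang2_fwd H s0 Tb.
  have n0 : s * conjq q s != 0 by rewrite mulf_neq0 // cj_eq0.
  move/eqP: ab; apply; apply: (mulIf n0); apply: (mulfI H4).
  by move: (etrans (esym Ea) Eb); rewrite -!mulrA.
have L2 : forall s c, common_tangent q (Bcirc q a) (Bcirc q b) (circle1 q s c) ->
    [/\ s != 0, (a + s * conjq q s - c) ^+ 2 = 4%:R * a * (s * conjq q s)
      & (b + s * conjq q s - c) ^+ 2 = 4%:R * b * (s * conjq q s)].
  move=> s c /and3P[_ /eqP Ta /eqP Tb].
  have [s0 Ea] := tang1_fwd H a0 Ta; have [_ Eb] := tang1_fwd H b0 Tb.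
  by split.
have L3 : forall s c : F, common_tangent q (Bcirc q a) (Bcirc q b) (circle1 q s c) ->
    ((c - b - s * conjq q s) / (c - a - s * conjq q s)) ^+ 2 = b / a.
  move=> s c HE; have [s0 Ea Eb] := L2 s c HE.
  have n0 : s * conjq q s != 0 by rewrite mulf_neq0 // cj_eq0.
  rewrite expr_div_n.
  have -> : (c - b - s * conjq q s) ^+ 2 = (b + s * conjq q s - c) ^+ 2 by ring.
  have -> : (c - a - s * conjq q s) ^+ 2 = (a + s * conjq q s - c) ^+ 2 by ring.
  by rewrite Ea Eb; fld; rewrite cj_eq0.
split; last first.
  move=> NS E; apply/negP => HE.
  have := L1 _ HE => /existsP[s /existsP[c /and3P[Hc c0 /eqP EE]]].
  rewrite EE in HE; apply: NS.
  exists ((c - b - s * conjq q s) / (c - a - s * conjq q s)); last exact: L3.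
  move: Hc; rewrite !inGFqE => /eqP Cc.
  by rewrite cjM cjV !cjB // Cc Ca Cb normK.
case=> y; rewrite inGFqE => /eqP Cy Ey; split => //.
have y2 : y ^+ 2 != 1.
  apply/eqP => h; move/eqP: ab; apply.
  by rewrite -[b](divfK a0) -Ey h mul1r.
have hb : b = a * y ^+ 2 by rewrite Ey mulrC divfK.
have y0 : y != 0 by apply: contra b0 => /eqP y0; rewrite hb y0 expr0n mulr0.
have yp : 1 + y != 0.
  apply: contra y2 => /eqP h; have -> : y = -1 by apply/eqP; rewrite -subr_eq0 opprK addrC h.
  by rewrite sqrrN expr1n.
have ym : 1 - y != 0.
  apply: contra y2 => /eqP h; have -> : y = 1 by apply/eqP; rewrite -subr_eq0 -oppr_eq0 opprB h.
  by rewrite expr1n.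
set n1 := a * (1 + y) ^+ 2 / 4%:R.
set c1 := a * (1 - y) ^+ 2 / 4%:R.
set c2 := a * (1 - - y) ^+ 2 / 4%:R.
have n1n2 : n1 != c1.
  rewrite -subr_eq0 (_ : n1 - c1 = a * y); first by nz.
  by rewrite /n1 /c1; fld.
have Cn1 : conjq q n1 = n1 by rewrite /n1 cjM cjM cjX cjV cjD // cj1 cjnat // Ca Cy.
have Cc1 : conjq q c1 = c1 by rewrite /c1 cjM cjM cjX cjV cjB // cj1 cjnat // Ca Cy.
have Cc2 : conjq q c2 = c2 by rewrite /c2 cjM cjM cjX cjV cjB // cjN // cj1 cjnat // Ca Cy.
have n10 : n1 != 0 by rewrite /n1; nz.
have c10 : c1 != 0 by rewrite /c1; nz.
have c20 : c2 != 0 by rewrite /c2 opprK; nz.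
pose g := fun s => circle1 q s (if s * conjq q s == n1 then c1 else c2).
pose T := fib q n1 :|: fib q c1.
have Eset : [set E | common_tangent q (Bcirc q a) (Bcirc q b) E] = g @: T.
  apply/setP => E; rewrite inE; apply/idP/imsetP.
    move=> HE; have := L1 _ HE => /existsP[s /existsP[c /and3P[Hc c0 /eqP EE]]].
    rewrite EE in HE *; have [s0 Ea Eb] := L2 _ _ HE.
    move: Ea Eb; set n := s * conjq q s => Ea Eb.
    have Hv : (b + n - c - y * (a + n - c)) * (b + n - c + y * (a + n - c)) = 0.
      have -> : (b + n - c - y * (a + n - c)) * (b + n - c + y * (a + n - c)) =
        (b + n - c) ^+ 2 - y ^+ 2 * (a + n - c) ^+ 2 by ring.
      by rewrite Ea Eb hb; ring.
    move/eqP: Hv; rewrite mulf_eq0 => /orP[]; first rewrite subr_eq0; [move=> /eqP Hv | rewrite addr_eq0 => /eqP Hv].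
      have [En Ec] := pair_solve H4 a0 ym hb Ea Hv.
      exists s; first by rewrite /T !inE -/n En eqxx.
      by rewrite /g -/n En eqxx Ec.
    have Hv' : b + n - c = - y * (a + n - c) by rewrite Hv mulNr.
    have ym' : 1 - - y != 0 by rewrite opprK.
    have hb' : b = a * (- y) ^+ 2 by rewrite sqrrN.
    have [En Ec] := pair_solve H4 a0 ym' hb' Ea Hv'.
    exists s; first by rewrite /T !inE -/n En eqxx orbT.
    by rewrite /g -/n En -/c1 eq_sym (negbTE n1n2) Ec.
  case=> s Hs ->; rewrite /g; case: eqP => Hn.
    by apply: (pair_tan H a0 Ca Cb Cy hb y2 Hn).
  have Hn' : s * conjq q s = a * (1 + - y) ^+ 2 / 4%:R.
    by move: Hs; rewrite /T !inE => /orP[] /eqP.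
  have Cy' : conjq q (- y) = - y by rewrite cjN // Cy.
  have y2' : (- y) ^+ 2 != 1 by rewrite sqrrN.
  have hb' : b = a * (- y) ^+ 2 by rewrite sqrrN.
  exact: (pair_tan H a0 Ca Cb Cy' hb' y2' Hn').
rewrite Eset card_in_imset.
  rewrite cardsU (fib_eq H Cn1 n10) (fib_eq H Cc1 c10).
  have -> : fib q n1 :&: fib q c1 = set0.
    apply/setP => z; rewrite !inE; apply/negP => /andP[/eqP e1 /eqP e2].
    by move/eqP: n1n2; apply; rewrite -e1 -e2.
  by rewrite cards0 subn0 mul2n -addnn addn1.
move=> s s' _ _ Es; rewrite /g in Es; move: Es; set cc := (if _ then _ else _); move=> Es. apply: (center_uniq (c := cc) H _ _ Es).
  by rewrite /cc; case: ifP.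
by rewrite /cc; case: ifP.
move=> s c _ _; exact: L3.
Qed.
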